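(* Let $A \subseteq \mathbb{R}^d$ be locally finite, let $0 \le p \le d$, and let $\gamma$ be a $p$-cell of the Delaunay mosaic of $A$ with dual $(d-p)$-dimensional Voronoi cell $\gamma^*$. Let $z_0$ be the intersection point of the affine hulls $\mathrm{aff}(\gamma)$ and $\mathrm{aff}(\gamma^* )$, and let $R_0$ be the maximum distance between a point of $\gamma$ and a point of $\gamma^*$. Then the projection of the $p$-tile $J(\gamma,\gamma^* )$ to $\mathbb{R}^d$ (i.e. the set $\{x : (x,L) \in J(\gamma,\gamma^* ) \text{ for some } L\}$) is contained in the closed ball with center $z_0$ and radius $R_0$.
   Context: $\mathrm{Gr}(p,d)$ is the Grassmannian of linear $p$-planes in $\mathbb{R}^d$. The $p$-tile is $J(\gamma,\gamma^* ) = \{(x,L) \in \mathbb{R}^d \times \mathrm{Gr}(p,d) : x \in \text{the orthogonal projection of } \gamma \text{ onto } L+x, \text{ and } (L+x)\cap\gamma^* \neq \emptyset\}$. *)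

(* Defs.v *)
(* points of R^d are row vectors 'rV[R]_d over R : realType;
   linear p-planes are MathComp vector subspaces {vspace 'rV[R]_d} of dimension p. *)
From HB Require Import structures.
From mathcomp Require Import all_boot all_order all_algebra.
From mathcomp Require Import classical_sets cardinality reals.
Set Implicit Arguments. Unset Strict Implicit. Unset Printing Implicit Defensive.
Import Order.TTheory GRing.Theory Num.Theory.
Local Open Scope ring_scope.
Local Open Scope classical_set_scope.

Section Geometry.
Variables (R : realType) (d : nat).
Notation vec := 'rV[R]_d.

Definition dotp (u v : vec) : R := (u *m v^T) 0 0.
Definition dist (x y : vec) : R := Num.sqrt (dotp (x - y) (x - y)).

Definition locally_finite (A : set vec) : Prop :=
  forall (c : vec) (r : R), finite_set [set a | A a /\ dist a c <= r].

Definition aff (S : set vec) : set vec :=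
  [set x | exists (n : nat) (s : 'I_n -> vec) (w : 'I_n -> R),
     (forall i, S (s i)) /\ \sum_(i < n) w i = 1 /\ x = \sum_(i < n) w i *: s i].
Definition conv (S : set vec) : set vec :=
  [set x | exists (n : nat) (s : 'I_n -> vec) (w : 'I_n -> R),
     (forall i, S (s i)) /\ (forall i, 0 <= w i) /\
     \sum_(i < n) w i = 1 /\ x = \sum_(i < n) w i *: s i].

Definition affdim (S : set vec) (p : nat) : Prop :=
  exists (a0 : vec) (U : {vspace vec}),
    S a0 /\ \dim U = p /\ forall x, aff S x <-> (x - a0) \in U.

Definition vdom (A : set vec) (a : vec) : set vec :=
  [set x | forall b, A b -> dist x a <= dist x b].
Definition vcell (A Q : set vec) : set vec :=
  [set x | forall a, Q a -> vdom A a x].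

(* Q generates a p-cell conv Q of the Delaunay mosaic of A, with dual Voronoi
   cell vcell A Q: Q is nonempty, the Voronoi cell is nonempty, Q is exactly
   the set of points of A whose domains contain that Voronoi cell, and
   conv Q has dimension p. *)
Definition delaunay_generator (A Q : set vec) (p : nat) : Prop :=
  Q `<=` A /\ Q !=set0 /\ vcell A Q !=set0 /\
  Q = [set a | A a /\ vcell A Q `<=` vdom A a] /\
  affdim (conv Q) p.

Definition grassmannian (p : nat) : set {vspace vec} := [set L | \dim L = p].

Definition orth_proj_onto (L : {vspace vec}) (x y z : vec) : Prop :=
  (z - x) \in L /\ forall v, v \in L -> dotp (y - z) v = 0.

Definition ptile (p : nat) (g gs : set vec) : set (vec * {vspace vec}) :=
  [set xL | grassmannian p xL.2 /\
     (exists y, g y /\ orth_proj_onto xL.2 xL.1 y xL.1) /\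
     (exists w, gs w /\ (w - xL.1) \in xL.2)].

Definition is_max_dist (g gs : set vec) (R0 : R) : Prop :=
  (forall y w, g y -> gs w -> dist y w <= R0) /\
  (exists y w, g y /\ gs w /\ dist y w = R0).

End Geometry.

(* Main.v *)
Require Import Defs.
From HB Require Import structures.
From mathcomp Require Import all_boot all_order all_algebra.
From mathcomp Require Import classical_sets cardinality reals.
From mathcomp Require Import lra.
Import Order.TTheory GRing.Theory Num.Theory.
Local Open Scope ring_scope.
Local Open Scope classical_set_scope.

Section Aux.
Set Implicit Arguments.
Variables (R : realType) (d : nat).
Notation vec := 'rV[R]_d.
Lemma dotpE (u v : vec) : dotp u v = \sum_j u 0 j * v 0 j.
Proof. by rewrite /dotp mxE; apply: eq_bigr => j _; rewrite mxE. Qed.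
Lemma dotpC (u v : vec) : dotp u v = dotp v u.
Proof. by rewrite !dotpE; apply: eq_bigr => j _; rewrite mulrC. Qed.
Lemma dotpDl (u v w : vec) : dotp (u + v) w = dotp u w + dotp v w.
Proof. by rewrite !dotpE -big_split; apply: eq_bigr => j _; rewrite mxE mulrDl. Qed.
Lemma dotpNl (u w : vec) : dotp (- u) w = - dotp u w.
Proof. by rewrite !dotpE -sumrN; apply: eq_bigr => j _; rewrite mxE mulNr. Qed.
Lemma dotpZl a (u w : vec) : dotp (a *: u) w = a * dotp u w.
Proof. by rewrite !dotpE mulr_sumr; apply: eq_bigr => j _; rewrite mxE mulrA. Qed.
Lemma dotp0l (w : vec) : dotp 0 w = 0.
Proof. by rewrite dotpE big1 // => j _; rewrite mxE mul0r. Qed.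
Lemma dotpDr (u v w : vec) : dotp w (u + v) = dotp w u + dotp w v.
Proof. by rewrite dotpC dotpDl !(dotpC w). Qed.
Lemma dotpNr (u w : vec) : dotp w (- u) = - dotp w u.
Proof. by rewrite dotpC dotpNl dotpC. Qed.
Lemma dotp_ge0 (u : vec) : 0 <= dotp u u.
Proof. by rewrite dotpE sumr_ge0 // => j _; rewrite -expr2 sqr_ge0. Qed.

Lemma aff_const (S : set vec) c k :
  (forall s, S s -> dotp s c = k) -> forall x, aff S x -> dotp x c = k.
Proof.
move=> H x [n [s [w [Hs [Hw ->]]]]].
rewrite (big_morph (fun u => dotp u c) (fun u v => dotpDl u v c) (dotp0l c)).
under eq_bigr do rewrite dotpZl H //.
by rewrite -mulr_suml Hw mul1r.
Qed.

Lemma conv_aff (S : set vec) x : conv S x -> aff S x.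
Proof. by move=> [n [s [w [Hs [_ [Hw ->]]]]]]; exists n, s, w. Qed.

Lemma single_aff (S : set vec) x : S x -> aff S x.
Proof.
move=> Sx; exists 1%N, (fun _ => x), (fun _ => 1); split=> //.
by rewrite !big_ord1 scale1r.
Qed.
End Aux.
Arguments dotpC {R d}.
Arguments dotp_ge0 {R d}.
Arguments aff_const {R d S c k}.
Arguments conv_aff {R d S x}.
Arguments single_aff {R d S x}.

Theorem lemma3p3 (R : realType) (d p : nat) (A Q : set 'rV[R]_d)
    (z0 : 'rV[R]_d) (R0 : R) :
  locally_finite A -> (p <= d)%N -> delaunay_generator A Q p ->
  aff (conv Q) z0 -> aff (vcell A Q) z0 ->
  is_max_dist (conv Q) (vcell A Q) R0 ->
  forall x : 'rV[R]_d,
    (exists L : {vspace 'rV[R]_d}, ptile p (conv Q) (vcell A Q) (x, L)) ->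
    dist x z0 <= R0.
Proof.
move=> _ _ [QA [[b0 Qb0] _]] Hz1 Hz2 [Rmax _] x [L [_ [[y [Hy [_ Horth]]] [w [Hw HwL]]]]].
have eqd : forall v a, vcell A Q v -> Q a ->
    dotp (v - a) (v - a) = dotp (v - b0) (v - b0).
  move=> v a Hv Qa.
  have e1 := Hv a Qa b0 (QA _ Qb0).
  have e2 := Hv b0 Qb0 a (QA _ Qa).
  have : dist v a = dist v b0 by apply/eqP; rewrite eq_le e1 e2.
  rewrite /dist => /(congr1 (fun t => t ^+ 2)).
  by rewrite !sqr_sqrtr // dotp_ge0.
have orth1 : forall v, vcell A Q v -> dotp (y - z0) (w - v) = 0.
  move=> v Hv.
  have HQ : forall a, Q a -> dotp a (w - v) = dotp b0 (w - v).
    move=> a Qa; have h1 := eqd w a Hw Qa; have h2 := eqd v a Hv Qa.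
    move: h1 h2; rewrite !(dotpDl, dotpDr, dotpNl, dotpNr) (dotpC a w) (dotpC a v)
      (dotpC b0 w) (dotpC b0 v) => h1 h2; lra.
  have Hc : forall s, conv Q s -> dotp s (w - v) = dotp b0 (w - v).
    by move=> s /conv_aff; apply: aff_const.
  have := aff_const Hc _ (single_aff Hy); have := aff_const Hc _ Hz1.
  rewrite dotpDl dotpNl => -> ->; lra.
have orth2 : dotp (y - z0) (w - z0) = 0.
  have Hc : forall v, vcell A Q v -> dotp v (y - z0) = dotp w (y - z0).
    move=> v Hv; have := orth1 v Hv; rewrite dotpDr dotpNr !(dotpC (y - z0)); lra.
  have := aff_const Hc _ Hz2; rewrite !(dotpDl,dotpDr,dotpNl,dotpNr).
  have c1 := dotpC w y; have c2 := dotpC w z0; have c3 := dotpC y z0; lra.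
have orth3 : dotp (y - x) (w - x) = 0 by apply: Horth.
apply: le_trans (Rmax _ _ Hy Hw).
rewrite /dist ler_sqrt ?dotp_ge0 //.
have h := dotp_ge0 (y - z0 - (x - w)).
move: h orth2 orth3; rewrite !(dotpDl,dotpDr,dotpNl,dotpNr).
have := dotpC x y; have := dotpC x w; have := dotpC x z0;
have := dotpC y w; have := dotpC y z0; have := dotpC w z0.
lra.
Qed.
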